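(* Let $D_{C_3}$ be a weighted oriented graph whose underlying graph is the $3$-cycle $C_3$. Then $I(D_{C_3})$ is Cohen-Macaulay if and only if there exists a vertex $x$ of $D_{C_3}$ with $w(x)=1$.
   Context: A weighted oriented graph $D$ with underlying simple graph on vertices $x_1,\ldots,x_n$ is an orientation of its edges with a weight function $w:V\to\mathbb{Z}_{>0}$; an edge oriented from $x_i$ to $x_j$ is written $(x_i,x_j)$. By convention, a source (a vertex all of whose edges are oriented away from it) is assigned weight $1$. The edge ideal is $I(D)=\langle x_ix_j^{w(x_j)}:(x_i,x_j)\in E(D)\rangle\subseteq A=K[x_1,\ldots,x_n]$, $K$ a field; $I(D)$ is Cohen-Macaulay if $A/I(D)$ is Cohen-Macaulay. *)

(* Defs.v *)
From HB Require Import structures.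
From mathcomp Require Import all_boot all_order all_algebra.
From mathcomp Require Import mpoly.
Set Implicit Arguments. Unset Strict Implicit. Unset Printing Implicit Defensive.
Import GRing.Theory.
Local Open Scope ring_scope.

Definition ideal_plus (K : fieldType) (n : nat) (I : {mpoly K[n]} -> Prop)
    (f : nat -> {mpoly K[n]}) (k : nat) (p : {mpoly K[n]}) : Prop :=
  exists (q : {mpoly K[n]}) (c : nat -> {mpoly K[n]}),
    I q /\ p = q + \sum_(i < k) c i * f i.

(* the irrelevant maximal ideal m = (x_0, ..., x_{n-1}): zero constant term *)
Definition in_irrelevant (K : fieldType) (n : nat) (p : {mpoly K[n]}) : Prop :=
  p@_0%MM = 0.

Definition regular_seq (K : fieldType) (n : nat) (I : {mpoly K[n]} -> Prop)
    (f : nat -> {mpoly K[n]}) (k : nat) : Prop :=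
  (forall i, (i < k)%N -> in_irrelevant (f i)) /\
  (forall i, (i < k)%N -> forall g : {mpoly K[n]},
      ideal_plus I f i (g * f i) -> ideal_plus I f i g) /\
  ~ ideal_plus I f k 1.

Definition depth_ge (K : fieldType) (n : nat) (I : {mpoly K[n]} -> Prop)
    (k : nat) : Prop :=
  exists f : nat -> {mpoly K[n]}, regular_seq I f k.

Definition is_prime_ideal (K : fieldType) (n : nat) (P : {mpoly K[n]} -> Prop)
  : Prop :=
  P 0 /\ (forall a b, P a -> P b -> P (a + b)) /\
  (forall a b, P b -> P (a * b)) /\ ~ P 1 /\
  (forall a b, P (a * b) -> P a \/ P b).

Definition dim_ge (K : fieldType) (n : nat) (I : {mpoly K[n]} -> Prop)
    (k : nat) : Prop :=
  exists P : nat -> {mpoly K[n]} -> Prop,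
    (forall i, (i <= k)%N -> is_prime_ideal (P i)) /\
    (forall p, I p -> P 0%N p) /\
    (forall i, (i < k)%N ->
       (forall p, P i p -> P i.+1 p) /\ exists p, P i.+1 p /\ ~ P i p).

(* A/I is Cohen-Macaulay: depth (w.r.t. the irrelevant ideal) = Krull dim *)
Definition cohen_macaulay (K : fieldType) (n : nat) (I : {mpoly K[n]} -> Prop)
  : Prop :=
  exists k : nat, depth_ge I k /\ ~ depth_ge I k.+1 /\
                  dim_ge I k /\ ~ dim_ge I k.+1.

(* E i j means the edge {x_i,x_j} is oriented as (x_i, x_j).  The underlying
   graph is C_3 on vertices 'I_3: every pair of distinct vertices is joined by
   exactly one oriented edge, no loops. *)
Definition orientation_C3 (E : rel 'I_3) : Prop :=
  (forall i, ~~ E i i) /\ (forall i j, i != j -> E i j = ~~ E j i).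

Definition is_source (E : rel 'I_3) (i : 'I_3) : Prop :=
  forall j, j != i -> E i j.

Definition weight_ok (E : rel 'I_3) (w : 'I_3 -> nat) : Prop :=
  (forall i, (0 < w i)%N) /\ (forall i, is_source E i -> w i = 1%N).

Definition edge_ideal (K : fieldType) (E : rel 'I_3) (w : 'I_3 -> nat)
    (p : {mpoly K[3]}) : Prop :=
  exists c : 'I_3 -> 'I_3 -> {mpoly K[3]},
    p = \sum_(i < 3) \sum_(j < 3 | E i j) c i j * ('X_i * 'X_j ^+ w j).

(* Main.v *)
Require Import Defs.
From HB Require Import structures.
From mathcomp Require Import all_boot all_order all_algebra.
From mathcomp Require Import mpoly.
From mathcomp Require Import ring zify.
Set Implicit Arguments. Unset Strict Implicit. Unset Printing Implicit Defensive.
Import GRing.Theory.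
Local Open Scope ring_scope.
Section S.
Variable K : fieldType.
Local Notation A := {mpoly K[3]}.

Definition sb (h : 'I_3 -> A) : {rmorphism A -> A} := mmap (@mpolyC 3 K) h.
Definition pvt (c : 'I_3) : {rmorphism A -> {poly K}} :=
  mmap (@polyC K) (fun j => if j == c then 'X else 0).
Definition io (c : 'I_3) : {rmorphism {poly K} -> A} :=
  horner_eval ('X_c : A) \o map_poly (@mpolyC 3 K).

Lemma sbX h i : sb h 'X_i = h i.
Proof. by rewrite /sb /= (mmapX h (mpolyC 3 (R:=K))) mmap1U. Qed.
Lemma sbC h c : sb h c%:MP = c%:MP.
Proof. by rewrite /sb /= (mmapC h (mpolyC 3 (R:=K))). Qed.
Lemma pvtX c i : pvt c 'X_i = if i == c then 'X else 0.
Proof. by rewrite /pvt /= (mmapX _ (@polyC K)) mmap1U. Qed.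
Lemma pvtC c k : pvt c k%:MP = k%:P.
Proof. by rewrite /pvt /= (mmapC _ (@polyC K)). Qed.
Lemma ioX c : io c 'X = 'X_c.
Proof. by rewrite /io /= map_polyX /horner_eval hornerX. Qed.
Lemma ioC c k : io c k%:P = k%:MP.
Proof. by rewrite /io /= map_polyC /horner_eval hornerC. Qed.

Lemma morph_ext (S : nzRingType) (phi psi : {rmorphism A -> S}) :
  (forall c, phi c%:MP = psi c%:MP) -> (forall i, phi 'X_i = psi 'X_i) ->
  forall p, phi p = psi p.
Proof.
move=> hC hX; elim/mpolyind => [|c m p _ _ IH]; first by rewrite !rmorph0.
rewrite !rmorphD IH; congr (_ + _).
rewrite -mul_mpolyC !rmorphM hC; congr (_ * _).
by rewrite mpolyXE_id !rmorph_prod; apply: eq_bigr => i _; rewrite !rmorphXn hX.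
Qed.

Lemma X_neq0 (i : 'I_3) : ('X_i : A) != 0.
Proof. by apply/eqP => /(congr1 (mcoeff U_(i))); rewrite mcoeffX eqxx mcoeff0 => /eqP; rewrite oner_eq0. Qed.

Lemma X_coef0 (i : 'I_3) : ('X_i : A)@_0 = 0.
Proof.
rewrite mcoeffX; case: eqP => // /(congr1 (fun m : 'X_{1..3} => m i)).
by rewrite mnm1E eqxx mnm0E.
Qed.

Definition kill (i : 'I_3) := sb (fun j => if j == i then 0 else 'X_j).

Lemma killX i j : kill i 'X_j = if j == i then 0 else 'X_j.
Proof. by rewrite /kill sbX. Qed.
Lemma killC i c : kill i c%:MP = c%:MP.
Proof. by rewrite /kill sbC. Qed.

Lemma dec_var (i : 'I_3) (p : A) : exists q, p = kill i p + 'X_i * q.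
Proof.
elim/mpolyind: p => [|c m p _ _ [q IH]]; first by exists 0; rewrite rmorph0 mulr0 addr0.
suff [q1 Hq1] : exists q1, c *: 'X_[m] = kill i (c *: 'X_[m]) + 'X_i * q1.
  exists (q1 + q); rewrite rmorphD {1}Hq1 {1}IH; ring.
rewrite -mul_mpolyC rmorphM killC mpolyXE_id rmorph_prod.
case Hm: (m i) => [|k].
  exists 0; rewrite mulr0 addr0; congr (_ * _); apply: eq_bigr => j _.
  rewrite rmorphXn killX; case: eqP => // ->; by rewrite Hm !expr0.
exists (c%:MP * ('X_i ^+ k * \prod_(j < 3 | j != i) 'X_j ^+ m j)).
rewrite [X in _ = _ * X + _](bigD1 i) //= rmorphXn killX eqxx Hm expr0n /= mul0r mulr0 add0r.
rewrite (bigD1 i) //= Hm exprS; ring.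
Qed.

Lemma cover3 (s m t j : 'I_3) : s != m -> s != t -> m != t -> [\/ j = s, j = m | j = t].
Proof.
by case: s => [[|[|[|?]]] ?]; case: m => [[|[|[|?]]] ?]; case: t => [[|[|[|?]]] ?];
  case: j => [[|[|[|?]]] ?] //= _ _ _; 
  (try by constructor 1; apply: val_inj); (try by constructor 2; apply: val_inj);
  (try by constructor 3; apply: val_inj).
Qed.

Lemma pv0 c p : (pvt c p).[0] = p@_0.
Proof.
have := @morph_ext _ (horner_eval 0 \o pvt c) (mcoeff 0 : {rmorphism A -> K}).
apply => [k|i]; rewrite /= /horner_eval.
  by rewrite pvtC hornerC mcoeffC eqxx mulr1.
by rewrite pvtX X_coef0; case: eqP; rewrite ?hornerX ?horner0.
Qed.

Lemma pio c q : pvt c (io c q) = q.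
Proof.
elim/poly_ind: q => [|q k IH]; first by rewrite !rmorph0.
by rewrite !rmorphD !rmorphM ioX ioC pvtX eqxx pvtC IH.
Qed.

Lemma kill2 (s m t : 'I_3) p : s != m -> s != t -> m != t ->
  kill m (kill s p) = io t (pvt t p).
Proof.
move=> sm st mt.
have := @morph_ext _ (kill m \o kill s) (io t \o pvt t); apply => [k|j];
  [change (kill m (kill s k%:MP) = io t (pvt t k%:MP)) |
   change (kill m (kill s 'X_j) = io t (pvt t 'X_j))].
  by rewrite !killC pvtC ioC.
case: (cover3 j sm st mt) => ->; rewrite !killX ?eqxx ?rmorph0 ?pvtX ?eqxx.
  by rewrite (negbTE st) rmorph0.
  by rewrite (negbTE mt) eq_sym (negbTE sm) killX eqxx rmorph0.
by rewrite eq_sym (negbTE st) killX eq_sym (negbTE mt) ioX.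
Qed.

Lemma L_dec2 (s m t : 'I_3) p : s != m -> s != t -> m != t ->
  exists u v, p = io t (pvt t p) + 'X_s * u + 'X_m * v.
Proof.
move=> sm st mt; have [u Hu] := dec_var s p; have [v Hv] := dec_var m (kill s p).
exists u, v.
rewrite -(kill2 p sm st mt).
rewrite {1}Hu {1}Hv.
by rewrite addrAC.
Qed.

Lemma m_dec (s m t : 'I_3) (p : A) : s != m -> s != t -> m != t -> p@_0 = 0 ->
  exists a b c, p = 'X_s * a + 'X_m * b + 'X_t * c.
Proof.
move=> sm st mt p0; have [u [v Huv]] := L_dec2 p sm st mt.
have [c Hc] := dec_var t (io t (pvt t p)).
have H0 : kill t (io t (pvt t p)) = 0.
  have := pv0 t p; rewrite p0; move: (pvt t p) => q.
  move=> q0; have /factor_theorem [r ->] : root q 0 by rewrite /root q0.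
  by rewrite subr0 rmorphM ioX rmorphM killX eqxx mulr0.
rewrite H0 add0r in Hc.
exists u, v, c; rewrite {1}Huv Hc; by rewrite -addrA addrC.
Qed.

Section Ideal.
Variables (E : rel 'I_3) (w : 'I_3 -> nat).
Local Notation I := (@edge_ideal K E w).
Local Notation G i j := ('X_i * 'X_j ^+ w j : A).

Lemma ideal0 : I 0.
Proof. by exists (fun _ _ => 0); rewrite big1 // => i _; rewrite big1 // => j _; rewrite mul0r. Qed.

Lemma idealD p q : I p -> I q -> I (p + q).
Proof.
move=> [c1 ->] [c2 ->]; exists (fun i j => c1 i j + c2 i j).
rewrite -big_split /=; apply: eq_bigr => i _; rewrite -big_split /=.
by apply: eq_bigr => j _; rewrite mulrDl.
Qed.

Lemma idealM r p : I p -> I (r * p).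
Proof.
move=> [c ->]; exists (fun i j => r * c i j).
rewrite mulr_sumr; apply: eq_bigr => i _; rewrite mulr_sumr.
by apply: eq_bigr => j _; rewrite mulrA.
Qed.

Lemma idealN p : I p -> I (- p).
Proof. by move=> h; rewrite -mulN1r; apply: idealM. Qed.

Lemma idealB p q : I p -> I q -> I (p - q).
Proof. by move=> hp hq; apply: idealD => //; apply: idealN. Qed.

Lemma ideal_gen i j q : E i j -> I (q * G i j).
Proof.
move=> Eij; exists (fun a b => if (a == i) && (b == j) then q else 0).
rewrite (bigD1 i) //= [X in _ = _ + X]big1 ?addr0; last first.
  move=> a /negbTE ->; rewrite big1 // => b _; by rewrite mul0r.
rewrite (bigD1 j) //= !eqxx /= [X in _ = _ + X]big1 ?addr0 // => b /andP [_ /negbTE ->].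
by rewrite mul0r.
Qed.

Definition mu : 'X_{1..3} := [multinom (w k).-1 | k < 3].

Lemma ideal_coef p : (forall k, 0 < w k)%N -> I p -> p@_mu = 0.
Proof.
move=> wpos [c ->]; rewrite raddf_sum big1 // => i _; rewrite raddf_sum big1 // => j _.
have -> : G i j = 'X_[U_(i) + U_(j) *+ w j] by rewrite mpolyXD mpolyXn.
apply/eqP; apply: contraT; rewrite -mcoeff_msupp.
rewrite (perm_mem (msuppMX _ _)) => /mapP [m' _] /(congr1 (fun m : 'X_{1..3} => m j)).
rewrite mnmE !mnmDE mulmnE !mnm1E eqxx mul1n.
have := wpos j; move: (i == j) (m' j) => b n; case: (w j) => // k _ /= h; exfalso; lia.
Qed.

Lemma Xmu_in i p : p != i -> E p i -> (1 < w p)%N -> (forall k, 0 < w k)%N ->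
  I ('X_i * 'X_[mu]).
Proof.
move=> pi Epi wp wpos.
pose m' := [multinom (if k == i then 0 else if k == p then (w k).-2 else (w k).-1)%N | k < 3].
suff -> : 'X_i * 'X_[mu] = 'X_[m'] * G p i by apply: ideal_gen.
rewrite mpolyXn -mpolyXD -!mpolyXD; congr 'X_[_]; apply/mnmP => k.
rewrite !mnmDE !mnmE mulmnE !mnm1E.
have := wpos k; have := wpos i.
case: (eqVneq k i) => [->|ki]; first by rewrite (negbTE pi) /=; lia.
case: (eqVneq k p) => [->|kp]; first by move=> *; simpl; lia.
move=> *; simpl; lia.
Qed.
End Ideal.

Definition o0 : 'I_3 := @Ordinal 3 0 isT.
Definition o1 : 'I_3 := @Ordinal 3 1 isT.
Definition o2 : 'I_3 := @Ordinal 3 2 isT.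

Lemma noreg (E : rel 'I_3) (w : 'I_3 -> nat) :
  (forall k, 1 < w k)%N -> (forall i, exists p, p != i /\ E p i) ->
  forall f0 : A, f0@_0 = 0 -> (forall g, @edge_ideal K E w (g * f0) -> @edge_ideal K E w g) -> False.
Proof.
move=> w2 hin f0 f00 reg.
have wpos k : (0 < w k)%N by apply: leq_trans (w2 k).
have Xin i : @edge_ideal K E w ('X_i * 'X_[mu w]).
  by have [p [pi Epi]] := hin i; exact: (Xmu_in pi Epi (w2 p) wpos).
have [a [b [c Hf]]] := @m_dec o0 o1 o2 f0 isT isT isT f00.
have Hu : @edge_ideal K E w ('X_[mu w] * f0).
  have -> : 'X_[mu w] * f0 = a * ('X_o0 * 'X_[mu w]) + b * ('X_o1 * 'X_[mu w]) + c * ('X_o2 * 'X_[mu w]).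
    by rewrite Hf; ring.
  by repeat apply: idealD; apply: idealM.
move: (ideal_coef wpos (reg _ Hu)); rewrite mcoeffX eqxx => /eqP; by rewrite oner_eq0.
Qed.

Definition pprime (R : comNzRingType) (Q : R -> Prop) : Prop :=
  Q 0 /\ (forall a b, Q a -> Q b -> Q (a + b)) /\
  (forall a b, Q b -> Q (a * b)) /\ ~ Q 1 /\
  (forall a b, Q (a * b) -> Q a \/ Q b).

Lemma pid (Q1 Q2 : {poly K} -> Prop) g0 s :
  pprime Q1 -> pprime Q2 -> (forall q, Q1 q -> Q2 q) -> Q1 g0 -> g0 != 0 ->
  Q2 s -> ~ Q1 s -> False.
Proof.
move=> [_ [_ [M1 [_ P1]]]] [_ [D2 [M2 [N2 _]]]] sub Qg0 g0n Q2s Q1s.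
suff : forall n (g : {poly K}), (size g <= n)%N -> Q1 g -> g != 0 -> False by move=> h; exact: (h (size g0) g0 (leqnn _)).
elim=> [|n IH] g sg Qg gn.
  by move: gn; rewrite -size_poly_eq0; move: sg; case: (size g).
have dn : gcdp g s != 0 by rewrite gcdp_eq0 negb_and gn.
have eg := divpK (dvdp_gcdl g s).
have [Qe|Qd] : Q1 (g %/ gcdp g s) \/ Q1 (gcdp g s) by apply: P1; rewrite eg.
  set e := g %/ gcdp g s in eg Qe *.
  have en : e != 0 by apply: contraNneq gn => e0; rewrite -eg e0 mul0r.
  have szg : size g = (size e + size (gcdp g s)).-1 by rewrite -{1}eg size_mul.
  have h1 : (0 < size (gcdp g s))%N by rewrite size_poly_gt0.
  have h3 : (0 < size e)%N by rewrite size_poly_gt0.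
  case: (ltnP (size e) (size g)) => h2.
    by apply: (IH e _ Qe en); rewrite -ltnS; exact: leq_trans h2 sg.
  have cop : coprimep g s.
    rewrite /coprimep; apply/eqP.
    move: h1 h2 h3 szg; move: (size g) (size (gcdp g s)) (size e) => x y z; lia.
  case/Bezout_coprimepP: cop => [[u v]] /= /eqp_size; rewrite size_poly1 => /eqP /size_poly1P [k kn hk].
  apply: N2.
  have -> : 1 = (k^-1)%:P * (u * g + v * s) by rewrite hk -polyCM mulVf.
  by apply: (M2); apply: (D2); apply: (M2) => //; apply: (sub).
apply: Q1s; rewrite -(divpK (dvdp_gcdr g s)); exact: M1.
Qed.

Lemma prime_ker (S : idomainType) (phi : {rmorphism A -> S}) :
  is_prime_ideal (fun p => phi p = 0).
Proof.
split; first by rewrite rmorph0.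
split; first by move=> a b ha hb; rewrite rmorphD ha hb addr0.
split; first by move=> a b hb; rewrite rmorphM hb mulr0.
split; first by rewrite rmorph1; apply/eqP; rewrite oner_eq0.
by move=> a b; rewrite rmorphM => /eqP; rewrite mulf_eq0 => /orP [] /eqP; [left|right].
Qed.

Lemma prime_pow (P : A -> Prop) x n : is_prime_ideal P -> P (x ^+ n) -> P x.
Proof.
move=> [_ [_ [_ [N1 Pr]]]]; elim: n => [|n IH]; first by rewrite expr0.
by rewrite exprS => /Pr [] // /IH.
Qed.

Lemma primeN (P : A -> Prop) x : is_prime_ideal P -> P x -> P (- x).
Proof. by move=> [_ [_ [M _]]] h; rewrite -mulN1r; apply: (M). Qed.

Lemma prime_red (P : A -> Prop) (a b c : 'I_3) : a != b -> a != c -> b != c ->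
  is_prime_ideal P -> P 'X_a -> P 'X_b -> forall p, P p <-> P (io c (pvt c p)).
Proof.
move=> ab ac bc hP Pa Pb p; have [u [v Huv]] := L_dec2 p ab ac bc.
have [_ [D [M _]]] := hP.
have Pau : P ('X_a * u) by rewrite mulrC; apply: (M).
have Pbv : P ('X_b * v) by rewrite mulrC; apply: (M).
set r := io c (pvt c p) in Huv *.
split => h.
  have -> : r = p + - ('X_a * u) + - ('X_b * v) by rewrite Huv addrAC addrK addrK.
  by apply: (D); [apply: (D)|]; rewrite // ; apply: (primeN).
by rewrite Huv; apply: (D); [apply: (D)|].
Qed.

Lemma io_prime (P : A -> Prop) c : is_prime_ideal P -> pprime (fun q => P (io c q)).
Proof.
move=> [P0 [D [M [N Pr]]]].
split; first by rewrite rmorph0.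
split; first by move=> x y hx hy; rewrite rmorphD; apply: (D).
split; first by move=> x y hy; rewrite rmorphM; apply: (M).
split; first by rewrite rmorph1.
by move=> x y; rewrite rmorphM; apply: (Pr).
Qed.

Lemma chain_contra (a b c : 'I_3) (P0 P1 P2 : A -> Prop) p1 p2 :
  a != b -> a != c -> b != c ->
  is_prime_ideal P0 -> is_prime_ideal P1 -> is_prime_ideal P2 ->
  P0 'X_a -> P0 'X_b -> (forall p, P0 p -> P1 p) -> (forall p, P1 p -> P2 p) ->
  P1 p1 -> ~ P0 p1 -> P2 p2 -> ~ P1 p2 -> False.
Proof.
move=> ab ac bc h0 h1 h2 Pa Pb s01 s12 P1p1 P0p1 P2p2 P1p2.
have r0 := prime_red ab ac bc h0 Pa Pb.
have r1 := prime_red ab ac bc h1 (s01 _ Pa) (s01 _ Pb).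
have r2 := prime_red ab ac bc h2 (s12 _ (s01 _ Pa)) (s12 _ (s01 _ Pb)).
apply: (@pid (fun q => P1 (io c q)) (fun q => P2 (io c q)) (pvt c p1) (pvt c p2)).
- exact: io_prime.
- exact: io_prime.
- by move=> q; apply: s12.
- by rewrite -r1.
- apply/eqP => q0; apply: P0p1; rewrite r0 q0 rmorph0; by case: h0.
- by rewrite -r2.
- by rewrite -r1.
Qed.

Section Dim.
Variables (E : rel 'I_3) (w : 'I_3 -> nat).
Hypothesis Eirr : forall i, ~~ E i i.
Hypothesis wpos : forall k, (0 < w k)%N.
Local Notation I := (@edge_ideal K E w).

Lemma gen_in i j : E i j -> I ('X_i * 'X_j ^+ w j).
Proof. by move=> h; rewrite -[X in I X]mul1r; apply: ideal_gen. Qed.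

Lemma pvt_I c p : I p -> pvt c p = 0.
Proof.
move=> [cf ->]; rewrite rmorph_sum big1 // => i _; rewrite rmorph_sum big1 // => j Eij.
rewrite !rmorphM rmorphXn !pvtX.
case: (eqVneq i c) => [ic|ic]; last by rewrite mul0r mulr0.
have : j != c by apply/eqP => jc; have := Eirr i; rewrite {2}ic -jc Eij.
by move/negbTE ->; rewrite expr0n; case: (w j) (wpos j) => // n _; rewrite !mulr0.
Qed.

Lemma dim1 : dim_ge I 1.
Proof.
exists (fun i => if i == 0%N then (fun p => pvt o2 p = 0) else (fun p : A => p@_0 = 0)).
split; first by case=> [|[|]] // _; [exact: prime_ker | exact: (prime_ker (mcoeff 0 : {rmorphism A -> K}))].
split; first by move=> p hp /=; exact: pvt_I hp.
case=> // _; split; first by move=> p h; change (pvt o2 p = 0) in h; change (p@_0 = 0); rewrite -(pv0 o2) h horner0.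
exists 'X_o2; split; first exact: X_coef0.
by rewrite /= pvtX eqxx; apply/eqP; rewrite polyX_eq0.
Qed.

End Dim.

Lemma notdim2 (E : rel 'I_3) (w : 'I_3 -> nat) :
  orientation_C3 E -> (forall k, (0 < w k)%N) -> ~ dim_ge (@edge_ideal K E w) 2.
Proof.
move=> [Eirr Eor] wpos [P [Pp [IP ch]]].
have h0 := Pp 0%N isT; have h1 := Pp 1%N isT; have h2 := Pp 2%N isT.
have [s01 [p1 [P1p1 P0p1]]] := ch 0%N isT.
have [s12 [p2 [P2p2 P1p2]]] := ch 1%N isT.
have pair i j : i != j -> P 0%N 'X_i \/ P 0%N 'X_j.
  move=> ij; have [_ [_ [_ [_ Pr]]]] := h0.
  case Eij : (E i j).
    have /IP/Pr [] := (@gen_in E w _ _ Eij); [by left | by move/(prime_pow h0); right].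
  have Eji : E j i by rewrite Eor 1?eq_sym // Eij.
  have /IP/Pr [] := (@gen_in E w _ _ Eji); [by right | by move/(prime_pow h0); left].
have go a b c : a != b -> a != c -> b != c -> P 0%N 'X_a -> P 0%N 'X_b -> False.
  move=> ab ac bc Pa Pb.
  exact: (chain_contra ab ac bc h0 h1 h2 Pa Pb s01 s12 P1p1 P0p1 P2p2 P1p2).
case: (pair o0 o1 isT) => [P0|P1].
  by case: (pair o1 o2 isT) => [P1|P2]; [apply: (go o0 o1 o2) | apply: (go o0 o2 o1)].
by case: (pair o0 o2 isT) => [P0|P2]; [apply: (go o0 o1 o2) | apply: (go o1 o2 o0)].
Qed.

Lemma Xn_neq0 (i : 'I_3) n : ('X_i ^+ n : A) != 0.
Proof. exact: expf_neq0 (X_neq0 i). Qed.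

Lemma div1 (i j : 'I_3) (a b : A) : i != j ->
  ('X_i + 'X_j) * a = 'X_j * b -> exists a', a = 'X_j * a' /\ ('X_i + 'X_j) * a' = b.
Proof.
move=> ij H; have := congr1 (kill j) H.
rewrite !rmorphM rmorphD !killX eqxx (negbTE ij) addr0 mul0r => /eqP.
rewrite mulf_eq0 (negbTE (X_neq0 i)) /= => /eqP ka.
have ka' : kill j a = 0 by exact: ka.
have [q Hq] := dec_var j a; rewrite ka' add0r in Hq.
exists q; split => //; move: H; rewrite Hq mulrCA => /(mulfI (X_neq0 j)) hh; exact: hh.
Qed.

Lemma divn (i j : 'I_3) n : i != j -> forall (a b : A),
  ('X_i + 'X_j) * a = 'X_j ^+ n * b -> exists a', a = 'X_j ^+ n * a'.
Proof.
move=> ij; elim: n => [|n IH] a b H; first by exists a; rewrite expr0 mul1r.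
rewrite exprS -mulrA in H; have [a1 [Ha1 /IH [a2 Ha2]]] := div1 ij H.
by exists a2; rewrite Ha1 Ha2 exprS mulrA.
Qed.

Lemma pvt_kill (i c : 'I_3) p : i != c -> pvt c (kill i p) = pvt c p.
Proof.
move=> ic; have := @morph_ext _ (pvt c \o kill i) (pvt c); apply => [k|j];
  [change (pvt c (kill i k%:MP) = pvt c k%:MP) | change (pvt c (kill i 'X_j) = pvt c 'X_j)].
  by rewrite killC.
rewrite killX; case: (eqVneq j i) => [->|//].
by rewrite rmorph0 pvtX (negbTE ic).
Qed.

Section J.
Variables (s m t : 'I_3) (P Q R : nat).
Hypotheses (sm : s != m) (st : s != t) (mt : m != t).
Hypotheses (P0 : (0 < P)%N) (Q0 : (0 < Q)%N) (R0 : (0 < R)%N) (RQ : (R <= Q)%N).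

Definition J (p : A) := exists c1 c2 c3,
  p = c1 * ('X_s * 'X_m ^+ P) + c2 * ('X_s * 'X_t ^+ R) + c3 * ('X_m * 'X_t ^+ Q).
Definition Q3 (p : A) := exists a b, p = a * 'X_m ^+ P + b * 'X_t ^+ R.

Lemma J0 : J 0.
Proof. by exists 0, 0, 0; rewrite !mul0r !addr0. Qed.
Lemma JD p q : J p -> J q -> J (p + q).
Proof.
move=> [a1 [a2 [a3 ->]]] [b1 [b2 [b3 ->]]]; exists (a1 + b1), (a2 + b2), (a3 + b3); ring.
Qed.
Lemma JM r p : J p -> J (r * p).
Proof. move=> [a1 [a2 [a3 ->]]]; exists (r * a1), (r * a2), (r * a3); ring. Qed.
Lemma JN p : J p -> J (- p).
Proof. by move=> h; rewrite -mulN1r; apply: JM. Qed.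
Lemma JB p q : J p -> J q -> J (p - q).
Proof. by move=> hp hq; apply: JD => //; apply: JN. Qed.

Lemma XtQR : ('X_t ^+ Q : A) = 'X_t ^+ (Q - R) * 'X_t ^+ R.
Proof. by rewrite -exprD subnK. Qed.

Lemma Jg1 r : J (r * ('X_s * 'X_m ^+ P)).
Proof. by exists r, 0, 0; rewrite !mul0r !addr0. Qed.
Lemma Jg2 r : J (r * ('X_s * 'X_t ^+ R)).
Proof. by exists 0, r, 0; rewrite !mul0r addr0 add0r. Qed.
Lemma Jg3 r : J (r * ('X_m * 'X_t ^+ Q)).
Proof. by exists 0, 0, r; rewrite !mul0r !add0r. Qed.
Lemma JsQ r : J (r * ('X_s * 'X_t ^+ Q)).
Proof.
have -> : r * ('X_s * 'X_t ^+ Q) = (r * 'X_t ^+ (Q - R)) * ('X_s * 'X_t ^+ R).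
  by rewrite XtQR; ring.
exact: Jg2.
Qed.

Lemma killsX : kill s 'X_s = 0. Proof. by rewrite killX eqxx. Qed.
Lemma killmX : kill s 'X_m = 'X_m. Proof. by rewrite killX eq_sym (negbTE sm). Qed.
Lemma killtX : kill s 'X_t = 'X_t. Proof. by rewrite killX eq_sym (negbTE st). Qed.

Lemma killJ p : J p -> exists r, kill s p = r * ('X_m * 'X_t ^+ Q).
Proof.
move=> [c1 [c2 [c3 ->]]]; exists (kill s c3).
by rewrite !rmorphD !rmorphM !rmorphXn killsX killmX killtX !mul0r !mulr0 !add0r.
Qed.

Lemma pvtJ p : J p -> pvt t p = 0.
Proof.
move=> [c1 [c2 [c3 ->]]].
by rewrite !rmorphD !rmorphM !rmorphXn !pvtX (negbTE st) (negbTE mt) !mul0r !mulr0 !addr0.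
Qed.

Lemma mcoefJ p : J p -> p@_0 = 0.
Proof.
by move=> h; rewrite -(pv0 t) pvtJ // horner0.
Qed.

Lemma colon h : J ('X_s * h) -> Q3 h.
Proof.
move=> [c1 [c2 [c3 H]]].
have := congr1 (kill s) H.
rewrite !rmorphD !rmorphM !rmorphXn killsX killmX killtX !mul0r !mulr0 !add0r => /esym/eqP.
rewrite mulf_eq0 mulf_eq0 (negbTE (X_neq0 m)) (negbTE (Xn_neq0 t Q)) !orbF => /eqP k3.
have [c3' Hc] := dec_var s c3; rewrite k3 add0r in Hc.
exists c1, (c2 + c3' * 'X_m * 'X_t ^+ (Q - R)).
apply: (mulfI (X_neq0 s)); rewrite H Hc XtQR; ring.
Qed.

Lemma colon2 k : Q3 ('X_s * k) -> Q3 k.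
Proof.
move=> [a [b H]].
have [a1 Ha] := dec_var s a; have [b1 Hb] := dec_var s b.
have := congr1 (kill s) H.
rewrite !rmorphD !rmorphM !rmorphXn killsX killmX killtX !mul0r => /esym E0.
exists a1, b1; apply: (mulfI (X_neq0 s)).
rewrite H Ha Hb; set u := kill s a; set v := kill s b.
have -> : (u + 'X_s * a1) * 'X_m ^+ P + (v + 'X_s * b1) * 'X_t ^+ R =
  (u * 'X_m ^+ P + v * 'X_t ^+ R) + 'X_s * (a1 * 'X_m ^+ P + b1 * 'X_t ^+ R) by ring.
by rewrite E0 add0r.
Qed.

Definition sig := sb (fun j => if j == s then 'X_s - 'X_m - 'X_t else 'X_j).
Definition sig' := sb (fun j => if j == s then 'X_s + 'X_m + 'X_t else 'X_j).

Lemma sigK p : sig' (sig p) = p.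
Proof.
have := @morph_ext _ (sig' \o sig) idfun; apply => [k|j];
  [change (sig' (sig k%:MP) = k%:MP) | change (sig' (sig 'X_j) = 'X_j)].
  by rewrite /sig /sig' !sbC.
case: (eqVneq j s) => [->|ne]; last by rewrite /sig /sig' !sbX (negbTE ne) sbX (negbTE ne).
have ms : (m == s) = false by rewrite eq_sym (negbTE sm).
have ts : (t == s) = false by rewrite eq_sym (negbTE st).
rewrite /sig sbX eqxx !rmorphB /sig' !sbX eqxx ms ts; ring.
Qed.

Lemma Q3reg h : Q3 (h * ('X_s + 'X_m + 'X_t)) -> Q3 h.
Proof.
move=> [a [b H]].
have sX : sig 'X_s = 'X_s - 'X_m - 'X_t by rewrite /sig sbX eqxx.
have mX : sig 'X_m = 'X_m by rewrite /sig sbX eq_sym (negbTE sm).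
have tX : sig 'X_t = 'X_t by rewrite /sig sbX eq_sym (negbTE st).
have : Q3 ('X_s * sig h).
  exists (sig a), (sig b); have := congr1 sig H.
  rewrite !rmorphM !rmorphD !rmorphM ?rmorphXn sX mX tX => <-; ring.
move/colon2 => [a' [b' H']].
exists (sig' a'), (sig' b'); rewrite -(sigK h) H'.
have mX' : sig' 'X_m = 'X_m by rewrite /sig' sbX eq_sym (negbTE sm).
have tX' : sig' 'X_t = 'X_t by rewrite /sig' sbX eq_sym (negbTE st).
by rewrite !rmorphD !rmorphM !rmorphXn mX' tX'.
Qed.

Lemma Jreg g : J (g * ('X_s + 'X_m + 'X_t)) -> J g.
Proof.
move=> Hg.
have [g1 Hg1] := dec_var s g; set g0 := kill s g in Hg1.
have J0g : J g0.
  have [r Hr] := killJ Hg.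
  move: Hr; rewrite rmorphM !rmorphD killsX killmX killtX add0r -/g0 => H.
  have H1 : ('X_t + 'X_m) * g0 = 'X_m * ('X_t ^+ Q * r) by rewrite addrC mulrC H; ring.
  have [a [-> H2]] := div1 (negbT (introF eqP (fun e => negP mt (introT eqP (esym e))))) H1.
  have H3 : ('X_m + 'X_t) * a = 'X_t ^+ Q * r by rewrite addrC.
  have [a2 ->] := divn mt H3.
  by rewrite mulrA mulrC; apply: Jg3.
have : J ('X_s * (g1 * ('X_s + 'X_m + 'X_t))).
  have -> : 'X_s * (g1 * ('X_s + 'X_m + 'X_t)) = g * ('X_s + 'X_m + 'X_t) - g0 * ('X_s + 'X_m + 'X_t).
    by rewrite Hg1; ring.
  apply: JB; [assumption | rewrite mulrC; apply: JM; assumption].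
move/colon/Q3reg => [a [b Hab]].
rewrite Hg1; apply: JD => //; rewrite Hab.
have -> : 'X_s * (a * 'X_m ^+ P + b * 'X_t ^+ R) = a * ('X_s * 'X_m ^+ P) + b * ('X_s * 'X_t ^+ R) by ring.
by apply: JD; [apply: Jg1 | apply: Jg2].
Qed.

Lemma pvt_f0 : pvt t ('X_s + 'X_m + 'X_t) = 'X.
Proof. by rewrite !rmorphD !pvtX (negbTE st) (negbTE mt) eqxx !add0r. Qed.

Lemma f0_coef : ('X_s + 'X_m + 'X_t : A)@_0 = 0.
Proof. by rewrite -(pv0 t) pvt_f0 hornerX. Qed.

Lemma Jdepth1 : depth_ge J 1.
Proof.
exists (fun _ => 'X_s + 'X_m + 'X_t); split; first by move=> i _; exact: f0_coef.
split.
  case=> // _ g [q [c [Jq H]]]; rewrite big_ord0 addr0 in H.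
  exists g, (fun _ => 0); split; last by rewrite big_ord0 addr0.
  by apply: Jreg; rewrite H.
move=> [q [c [Jq H]]]; rewrite big_ord1 in H.
have := congr1 (fun p => (pvt t p).[0]) H.
rewrite rmorph1 rmorphD pvtJ // add0r rmorphM pvt_f0 hornerC hornerM hornerX mulr0.
by move/eqP; rewrite oner_eq0.
Qed.

Lemma Jnotdepth2 : ~ depth_ge J 2.
Proof.
move=> [f [inm [reg _]]].
have f00 : (f 0%N)@_0 = 0 := inm 0%N isT.
have f10 : (f 1%N)@_0 = 0 := inm 1%N isT.
have reg0 g : J (g * f 0%N) -> J g.
  move=> h; have H : ideal_plus J f 0 (g * f 0%N).
    by exists (g * f 0%N), (fun _ => 0); rewrite big_ord0 addr0.
  by have [q [c [Jq ->]]] := reg 0%N isT g H; rewrite big_ord0 addr0.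
pose Jf p := exists q c, J q /\ p = q + c * f 0%N.
have reg1 g : Jf (g * f 1%N) -> Jf g.
  move=> [q [c [Jq H]]].
  have H' : ideal_plus J f 1 (g * f 1%N) by exists q, (fun _ => c); rewrite big_ord1.
  by have [q' [c' [Jq' ->]]] := reg 1%N isT g H'; exists q', (c' 0%N); rewrite big_ord1.
have JfD p q : Jf p -> Jf q -> Jf (p + q).
  move=> [q1 [c1 [J1 ->]]] [q2 [c2 [J2 ->]]]; exists (q1 + q2), (c1 + c2).
  by split; [apply: JD | ring].
have JfM r p : Jf p -> Jf (r * p).
  move=> [q1 [c1 [J1 ->]]]; exists (r * q1), (r * c1).
  by split; [apply: JM | ring].
have [u [v Hf0]] := L_dec2 (f 0%N) sm st mt.
set F := pvt t (f 0%N) in Hf0.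
have F0 : root F 0 by rewrite /root /F pv0 f00.
have [G HF] := factor_theorem _ _ F0; rewrite subr0 in HF.
have ioF : io t F = io t G * 'X_t by rewrite HF rmorphM ioX.
set y := 'X_t ^+ Q * io t G.
have Xy j : Jf ('X_j * y).
  case: (cover3 j sm st mt) => ->.
  - exists ('X_s * y), 0; split; last by rewrite mul0r addr0.
    rewrite /y; move: (io t G) => z.
    have -> : 'X_s * ('X_t ^+ Q * z) = z * ('X_s * 'X_t ^+ Q) by ring.
    exact: JsQ.
  - exists ('X_m * y), 0; split; last by rewrite mul0r addr0.
    rewrite /y; move: (io t G) => z.
    have -> : 'X_m * ('X_t ^+ Q * z) = z * ('X_m * 'X_t ^+ Q) by ring.
    exact: Jg3.
  - exists (- (u * ('X_s * 'X_t ^+ Q) + v * ('X_m * 'X_t ^+ Q))), ('X_t ^+ Q).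
    split; first by apply: JN; apply: JD; [apply: JsQ | apply: Jg3].
    rewrite Hf0 ioF /y; move: (io t G) => z; ring.
have Jfy : Jf (y * f 1%N).
  have [a [b [c Hf1]]] := m_dec sm st mt f10.
  have -> : y * f 1%N = a * ('X_s * y) + b * ('X_m * y) + c * ('X_t * y).
    by rewrite Hf1 /y; move: (io t G) => z; ring.
  by apply: (JfD); [apply: (JfD)|]; apply: (JfM).
have [q0 [c0 [Jq0 Hy]]] := reg1 y Jfy.
have Jmc : J ('X_m * c0).
  apply: (reg0).
  have -> : 'X_m * c0 * f 0%N = 'X_m * y - 'X_m * q0 by rewrite Hy; ring.
  apply: JB; last by apply: JM.
  rewrite /y; move: (io t G) => z.
  have -> : 'X_m * ('X_t ^+ Q * z) = z * ('X_m * 'X_t ^+ Q) by ring.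
  exact: Jg3.
have [r Hr] := killJ Jmc.
rewrite rmorphM killmX in Hr.
have kc0 : kill s c0 = r * 'X_t ^+ Q.
  apply: (mulfI (X_neq0 m)); rewrite Hr; move: (kill s c0) => z; ring.
have pk : pvt t c0 = pvt t r * 'X ^+ Q.
  by rewrite -(pvt_kill _ st) kc0 rmorphM rmorphXn pvtX eqxx.
have := congr1 (pvt t) Hy.
rewrite /y rmorphM rmorphXn pvtX eqxx pio rmorphD pvtJ // add0r rmorphM pk -/F HF.
move: (pvt t r) => z H.
have : 'X ^+ Q * G * (1 - z * 'X) = 0.
  by rewrite mulrBr mulr1 {1}H; ring.
move/eqP; rewrite !mulf_eq0 expf_eq0 polyX_eq0 andbF /=.
case/orP => [/eqP G0|]; last first.
  move/eqP/(congr1 (fun p => p.[0])); rewrite hornerD hornerN hornerM hornerX mulr0 subr0 hornerC.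
  by rewrite horner0 => /eqP; rewrite oner_eq0.
rewrite HF G0 mul0r rmorph0 add0r in Hf0.
have : J ('X_t ^+ Q).
  apply: (reg0); rewrite Hf0.
  have -> : 'X_t ^+ Q * ('X_s * u + 'X_m * v) = u * ('X_s * 'X_t ^+ Q) + v * ('X_m * 'X_t ^+ Q) by ring.
  by apply: JD; [apply: JsQ | apply: Jg3].
move/pvtJ; rewrite rmorphXn pvtX eqxx => /eqP; by rewrite expf_eq0 polyX_eq0 andbF.
Qed.

End J.

Lemma sum_E (E : rel 'I_3) (a1 b1 a2 b2 a3 b3 : 'I_3) (F : 'I_3 -> 'I_3 -> A) :
  (a1, b1) != (a2, b2) -> (a1, b1) != (a3, b3) -> (a2, b2) != (a3, b3) ->
  (forall i j, E i j = [|| (i == a1) && (j == b1), (i == a2) && (j == b2) | (i == a3) && (j == b3)]) ->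
  \sum_(i < 3) \sum_(j < 3 | E i j) F i j = F a1 b1 + F a2 b2 + F a3 b3.
Proof.
move=> d12 d13 d23 HE.
rewrite pair_big_dep /=.
rewrite (bigD1 (a1, b1)) /=; last by rewrite HE !eqxx.
rewrite (bigD1 (a2, b2)) /=; last by rewrite HE !eqxx orbT /= eq_sym.
rewrite (bigD1 (a3, b3)) /=; last by rewrite HE !eqxx !orbT /= eq_sym d13 eq_sym d23.
rewrite big_pred0 ?addr0 ?addrA //.
case=> i j /=; rewrite HE -!xpair_eqE.
by case: ((i, j) == (a1, b1)); case: ((i, j) == (a2, b2)); case: ((i, j) == (a3, b3)).
Qed.

Lemma edge3 (E : rel 'I_3) (w : 'I_3 -> nat) (a1 b1 a2 b2 a3 b3 : 'I_3) :
  (a1, b1) != (a2, b2) -> (a1, b1) != (a3, b3) -> (a2, b2) != (a3, b3) ->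
  (forall i j, E i j = [|| (i == a1) && (j == b1), (i == a2) && (j == b2) | (i == a3) && (j == b3)]) ->
  forall p, @edge_ideal K E w p <-> exists c1 c2 c3,
    p = c1 * ('X_a1 * 'X_b1 ^+ w b1) + c2 * ('X_a2 * 'X_b2 ^+ w b2) + c3 * ('X_a3 * 'X_b3 ^+ w b3).
Proof.
move=> d12 d13 d23 HE p; split.
  move=> [c ->]; rewrite (sum_E (fun i j => c i j * ('X_i * 'X_j ^+ w j)) d12 d13 d23 HE).
  by exists (c a1 b1), (c a2 b2), (c a3 b3).
move=> [c1 [c2 [c3 ->]]].
exists (fun i j => if (i, j) == (a1, b1) then c1 else if (i, j) == (a2, b2) then c2
                   else if (i, j) == (a3, b3) then c3 else 0).
rewrite (sum_E (fun i j => _ * ('X_i * 'X_j ^+ w j)) d12 d13 d23 HE) /=.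
have e21 : ((a2, b2) == (a1, b1)) = false by rewrite eq_sym (negbTE d12).
have e31 : ((a3, b3) == (a1, b1)) = false by rewrite eq_sym (negbTE d13).
have e32 : ((a3, b3) == (a2, b2)) = false by rewrite eq_sym (negbTE d23).
by rewrite !eqxx e21 e31 e32.
Qed.
End S.
Section Final.
Variable K : fieldType.
Local Notation A := {mpoly K[3]}.

Lemma pne (a b c d : 'I_3) : a != c \/ b != d -> (a, b) != (c, d).
Proof. by rewrite xpair_eqE negb_and => -[] ->; rewrite ?orbT. Qed.

Lemma cover_others (s : 'I_3) : exists m t, [/\ s != m, s != t & m != t].
Proof.
case: s => [[|[|[|?]]] ?] //.
- by exists o1, o2.
- by exists o0, o2.
- by exists o0, o1.
Qed.

Lemma third (a b : 'I_3) : a != b -> exists c, a != c /\ b != c.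
Proof.
case: a => [[|[|[|?]]] ?]; case: b => [[|[|[|?]]] ?] // _.
- by exists o2.
- by exists o1.
- by exists o2.
- by exists o0.
- by exists o1.
- by exists o0.
Qed.

Section Or.
Variable E : rel 'I_3.
Hypotheses (Eirr : forall i, ~~ E i i) (Eor : forall i j, i != j -> E i j = ~~ E j i).
Variables (s m t : 'I_3).
Hypotheses (sm : s != m) (st : s != t) (mt : m != t).

Lemma Eform_trans : E s m -> E s t -> E m t ->
  forall i j, E i j = [|| (i == s) && (j == m), (i == s) && (j == t) | (i == m) && (j == t)].
Proof.
move=> Esm Est Emt.
have ms : (m == s) = false by rewrite eq_sym (negbTE sm).
have ts : (t == s) = false by rewrite eq_sym (negbTE st).
have tm : (t == m) = false by rewrite eq_sym (negbTE mt).
have Ems : E m s = false by rewrite Eor ?Esm // ms.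
have Ets : E t s = false by rewrite Eor ?Est // ts.
have Etm : E t m = false by rewrite Eor ?Emt // tm.
have Ess := negbTE (Eirr s); have Emm := negbTE (Eirr m); have Ett := negbTE (Eirr t).
move=> i j; case: (cover3 i sm st mt) => ->; case: (cover3 j sm st mt) => ->;
  by rewrite ?eqxx ?(negbTE sm) ?(negbTE st) ?(negbTE mt) ?ms ?ts ?tm /=
    ?Esm ?Est ?Emt ?Ems ?Ets ?Etm ?Ess ?Emm ?Ett.
Qed.

Lemma Eform_cyc : E s m -> E m t -> E t s ->
  forall i j, E i j = [|| (i == s) && (j == m), (i == m) && (j == t) | (i == t) && (j == s)].
Proof.
move=> Esm Emt Ets.
have ms : (m == s) = false by rewrite eq_sym (negbTE sm).
have ts : (t == s) = false by rewrite eq_sym (negbTE st).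
have tm : (t == m) = false by rewrite eq_sym (negbTE mt).
have Ems : E m s = false by rewrite Eor ?Esm // ms.
have Est : E s t = false by rewrite Eor ?Ets // (negbTE st).
have Etm : E t m = false by rewrite Eor ?Emt // tm.
have Ess := negbTE (Eirr s); have Emm := negbTE (Eirr m); have Ett := negbTE (Eirr t).
move=> i j; case: (cover3 i sm st mt) => ->; case: (cover3 j sm st mt) => ->;
  by rewrite ?eqxx ?(negbTE sm) ?(negbTE st) ?(negbTE mt) ?ms ?ts ?tm /=
    ?Esm ?Est ?Emt ?Ems ?Ets ?Etm ?Ess ?Emm ?Ett.
Qed.

Lemma src_of : E s m -> E s t -> [exists v, [forall j, (j != v) ==> E v j]].
Proof.
move=> Esm Est; apply/existsP; exists s; apply/forallP => j; apply/implyP => js.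
by case: (cover3 j sm st mt) => jj; move: js; rewrite jj ?eqxx.
Qed.

End Or.
End Final.

From Stdlib Require Import FunctionalExtensionality PropExtensionality.

Theorem theorem4p3 (K : fieldType) (E : rel 'I_3) (w : 'I_3 -> nat) :
  orientation_C3 E -> weight_ok E w ->
  (cohen_macaulay (@edge_ideal K E w) <-> exists x : 'I_3, w x = 1%N).
Proof.
move=> [Eirr Eor] [wpos wsrc].
have D1 := dim1 K Eirr wpos.
have ND2 := @notdim2 K E w (conj Eirr Eor) wpos.
split.
  move=> [k [dk [ndk [dmk ndmk]]]].
  case: (boolP [exists x, w x == 1%N]) => [/existsP [x /eqP hx]|]; first by exists x.
  rewrite negb_exists => /forallP hw.
  have w2 k0 : (1 < w k0)%N.
    by have := wpos k0; have := hw k0; case: (w k0) => [|[|n]].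
  have hin i : exists p, p != i /\ E p i.
    case: (boolP [forall j, (j != i) ==> E i j]) => [/forallP hs|].
      have : w i = 1%N by apply: wsrc => j ji; exact: (implyP (hs j) ji).
      by move/eqP; rewrite (negbTE (hw i)).
    rewrite negb_forall => /existsP [j]; rewrite negb_imply => /andP [ji nEij].
    by exists j; split => //; rewrite Eor.
  case: k dk ndk dmk ndmk => [|k] dk ndk dmk ndmk; first by case: (ndmk D1).
  have [f [inm [reg _]]] := dk.
  exfalso; apply: (noreg w2 hin (inm 0%N isT)) => g hg.
  have H : ideal_plus (@edge_ideal K E w) f 0 (g * f 0%N).
    by exists (g * f 0%N), (fun _ => 0); rewrite big_ord0 addr0.
  by have [q [c [Jq ->]]] := reg 0%N isT g H; rewrite big_ord0 addr0.
move=> [x wx].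
suff [s [m [t [P [Q [R [sm [st [mt [RQ HI]]]]]]]]]] : exists s m t P Q R,
    [/\ s != m, s != t, m != t, (R <= Q)%N & @edge_ideal K E w = J s m t P Q R].
  exists 1%N; split; first by rewrite HI; apply: Jdepth1.
  split; first by rewrite HI; apply: Jnotdepth2.
  by split.
case: (boolP [exists v, [forall j, (j != v) ==> E v j]]) => [/existsP [s /forallP hs]|nos].
  have [m1 [t1 [d1 d2 d3]]] := cover_others s.
  have Esm1 : E s m1 by apply: (implyP (hs m1)); rewrite eq_sym.
  have Est1 : E s t1 by apply: (implyP (hs t1)); rewrite eq_sym.
  have d3' : t1 != m1 by rewrite eq_sym.
  case Emt : (E m1 t1).
    exists s, m1, t1, (w m1), (w t1), (w t1); split => //.
    apply: functional_extensionality => p; apply: propositional_extensionality.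
    have HE := Eform_trans Eirr Eor d1 d2 d3 Esm1 Est1 Emt.
    exact: (edge3 (K:=K) w (@pne s m1 s t1 (or_intror d3)) (@pne s m1 m1 t1 (or_introl d1)) (@pne s t1 m1 t1 (or_introl d1)) HE p).
  have Etm : E t1 m1 by rewrite Eor // Emt.
  exists s, t1, m1, (w t1), (w m1), (w m1); split => //.
  apply: functional_extensionality => p; apply: propositional_extensionality.
  have HE := Eform_trans Eirr Eor d2 d1 d3' Est1 Esm1 Etm.
  exact: (edge3 (K:=K) w (@pne s t1 s m1 (or_intror d3')) (@pne s t1 t1 m1 (or_introl d2))
    (@pne s m1 t1 m1 (or_introl d2)) HE p).
set s := x.
have [t [ts Ets]] : exists t, t != s /\ E t s.
  move: nos; rewrite negb_exists => /forallP /(_ s); rewrite negb_forall => /existsP [j].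
  by rewrite negb_imply => /andP [js nE]; exists j; split => //; rewrite Eor.
have st : s != t by rewrite eq_sym.
have [m [sm tm]] := third st.
have ms : m != s by rewrite eq_sym.
have mt : m != t by rewrite eq_sym.
have Esm : E s m.
  case Esm : (E s m) => //.
  have Ems : E m s by rewrite Eor // Esm.
  case Emt : (E m t).
    by move: nos; rewrite (src_of ms mt st Ems Emt).
  have Etm : E t m by rewrite Eor // Emt.
  by move: nos; rewrite (src_of ts tm sm Ets Etm).
have Emt : E m t.
  case Emt : (E m t) => //.
  have Etm : E t m by rewrite Eor // Emt.
  by move: nos; rewrite (src_of ts tm sm Ets Etm).
exists s, m, t, (w m), (w t), 1%N; split => //.
apply: functional_extensionality => p; apply: propositional_extensionality.
have HE := Eform_cyc Eirr Eor sm st mt Esm Emt Ets.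
rewrite (edge3 (K:=K) w (@pne s m m t (or_introl sm)) (@pne s m t s (or_introl st))
    (@pne m t t s (or_introl mt)) HE p).
rewrite /J wx expr1; split => -[c1 [c2 [c3 ->]]]; exists c1, c3, c2; ring.
Qed.
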